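(* Let $\mathrm{Lab}$ be a labelling system on a finite simplicial tree $T$ with index set $\{1,\dots,N\}$. Then every edge of $T$ is useless if and only if there is a full vertex, i.e. a vertex $z$ with $\mathrm{Lab}(z)=\{1,\dots,N\}$.
   Context: A labelling system on a finite simplicial tree $T$ assigns to each vertex $v$ a subset $\mathrm{Lab}(v)\subset\{1,\dots,N\}$ such that (A) $\mathrm{Lab}(a)\cap\mathrm{Lab}(b)\subset\mathrm{Lab}(x)$ whenever $x$ is a vertex on the shortest path $[ab]$ between vertices $a,b$, and (B) $\bigcup_v\mathrm{Lab}(v)=\{1,\dots,N\}$. Removing the open edge $e$ from $T$ leaves two closed connected components $T^+(e)$, $T^-(e)$. The edge $e$ is useless if $\bigcup_{v\in T^+(e)}\mathrm{Lab}(v)$ or $\bigcup_{v\in T^-(e)}\mathrm{Lab}(v)$ equals $\{1,\dots,N\}$, and useful otherwise. *)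

(* Defs.v *)
From mathcomp Require Import all_boot.
Set Implicit Arguments. Unset Strict Implicit. Unset Printing Implicit Defensive.

Definition simple_graph (T : finType) (e : rel T) : Prop :=
  symmetric e /\ irreflexive e.

Definition has_cycle (T : finType) (e : rel T) : Prop :=
  exists (x : T) (p : seq T),
    [/\ 2 <= size p, uniq (x :: p), path e x p & e (last x p) x].

Definition is_tree (T : finType) (e : rel T) : Prop :=
  [/\ simple_graph e, 0 < #|T|, (forall a b : T, connect e a b) & ~ has_cycle e].

Definition on_geodesic (T : finType) (e : rel T) (a b x : T) : Prop :=
  exists p : seq T,
    [/\ path e a p, last a p = b, x \in a :: p &
        forall q : seq T, path e a q -> last a q = b -> size p <= size q].

(* Labelling system with index set 'I_N (standing for {1,...,N}). *)
Definition labelling_system (T : finType) (e : rel T) (N : nat)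
  (Lab : T -> {set 'I_N}) : Prop :=
  (forall a b x : T, on_geodesic e a b x -> Lab a :&: Lab b \subset Lab x) /\
  \bigcup_(v : T) Lab v = setT.

Definition remove_edge (T : finType) (e : rel T) (u v : T) : rel T :=
  fun x y => e x y && ~~ (((x == u) && (y == v)) || ((x == v) && (y == u))).

Definition comp_plus (T : finType) (e : rel T) (u v : T) : {set T} :=
  [set w | connect (remove_edge e u v) u w].
Definition comp_minus (T : finType) (e : rel T) (u v : T) : {set T} :=
  [set w | connect (remove_edge e u v) v w].

Definition useless_edge (T : finType) (e : rel T) (N : nat)
  (Lab : T -> {set 'I_N}) (u v : T) : Prop :=
  \bigcup_(w in comp_plus e u v) Lab w = setT \/
  \bigcup_(w in comp_minus e u v) Lab w = setT.

(* Main.v *)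
Require Import Defs.
From mathcomp Require Import all_boot.
From Stdlib Require Import Classical.


Lemma rem_sub (T : finType) (e : rel T) u v : subrel (remove_edge e u v) e.
Proof. by move=> x y /andP[]. Qed.

Lemma rem_comm (T : finType) (e : rel T) u v : remove_edge e u v =2 remove_edge e v u.
Proof. by move=> x y; rewrite /remove_edge orbC. Qed.

Lemma rem_sym (T : finType) (e : rel T) (eS : symmetric e) u v : symmetric (remove_edge e u v).
Proof.
move=> x y; rewrite /remove_edge eS; congr (_ && _).
by rewrite orbC; congr (~~ (_ || _)); rewrite andbC.
Qed.

Lemma rem_connect_sym (T : finType) (e : rel T) (eS : symmetric e) u v x y :
  connect (remove_edge e u v) x y = connect (remove_edge e u v) y x.
Proof. by apply: sym_connect_sym; exact: rem_sym. Qed.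

Lemma path_avoid (T : finType) (e : rel T) r s x p : path e x p -> r \notin x :: p ->
  path (remove_edge e r s) x p /\ path (remove_edge e s r) x p.
Proof.
elim: p x => [|y p IH] x //= /andP[exy pp].
rewrite !in_cons !negb_or => /andP[rx /andP[ry rp]].
have [h1 h2] := IH y pp ltac:(by rewrite in_cons negb_or ry rp).
rewrite h1 h2 /remove_edge exy /=.
rewrite ![x == r]eq_sym ![y == r]eq_sym (negbTE rx) (negbTE ry) /=.
by rewrite !andbF.
Qed.

Lemma no_conn (T : finType) (e : rel T) (eS : symmetric e) (eI : irreflexive e) u v : ~ has_cycle e -> e u v -> ~~ connect (remove_edge e u v) u v.
Proof.
move=> nc euv; apply/negP => /connectP[p0 pp0 ev].
case: (shortenP pp0) ev => p pp up _ ev.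
have uv : u != v by apply/eqP => h; move: euv; rewrite -h eI.
case: p pp up ev => [|y p] /=; first by move=> _ _ h; rewrite h eq_refl in uv.
move=> /andP[ruy pp] up ev.
case: p pp up ev => [|z p] pp up ev.
  move: ruy; rewrite /remove_edge /= /= in ev; rewrite ev /remove_edge !eqxx /=; by rewrite andbF.
apply: nc; exists u, [:: y, z & p]; split => //.
- by apply: (sub_path (@rem_sub T e u v)); rewrite /= ruy.
- by move: ev => /= <-; rewrite eS.
Qed.

Lemma shortest (T : finType) (r : rel T) a b : connect r a b ->
  exists p, [/\ path r a p, last a p = b &
    forall q, path r a q -> last a q = b -> size p <= size q].
Proof.
move/connectP=> [p0 pp0 e0].
suff H : forall n p, size p <= n -> path r a p -> last a p = b ->
  exists p, [/\ path r a p, last a p = b &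
    forall q, path r a q -> last a q = b -> size p <= size q].
  exact: (H _ p0 (leqnn _) pp0 (esym e0)).
elim=> [|n IH] p sp pp lp.
  by exists p; split => // q _ _; rewrite (leq_trans sp).
case: (classic (exists q, [/\ path r a q, last a q = b & size q < size p])).
  move=> [q [pq lq sq]]; apply: (IH q) => //.
  by rewrite -ltnS (leq_trans sq sp).
move=> nq; exists p; split => // q pq lq.
rewrite leqNgt; apply/negP => sq; apply: nq; by exists q.
Qed.

Lemma two_sides (T : finType) (e : rel T) u v z : u != v -> connect e u z ->
  connect (remove_edge e u v) u z \/ connect (remove_edge e u v) v z.
Proof.
move=> uv /connectP[p0 pp0 ->]; case: (shortenP pp0) => p pp up _.
case: (boolP (v \in u :: p)) => vin.
- right; move: vin; rewrite in_cons eq_sym (negbTE uv) /= => vp.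
  case/splitPr: vp pp up => p1 p2; rewrite cat_path /= => /and3P[_ _ pp2].
  rewrite mem_cat negb_or => /andP[/andP[_ up2] _].
  have [h1 _] := @path_avoid _ _ u v _ _ pp2 up2.
  by apply/connectP; exists p2 => //; rewrite last_cat.
- left; have [_ h2] := @path_avoid _ _ v u _ _ pp vin.
  by apply/connectP; exists p.
Qed.

Lemma good_full (T : finType) (e : rel T) (N : nat) (Lab : T -> {set 'I_N}) :
  is_tree e -> labelling_system e Lab -> forall z,
  (forall y, e z y -> \bigcup_(w in comp_plus e z y) Lab w = setT) -> Lab z = setT.
Proof.
case=> [[eS eI] _ conn nc] [lab cover] z good.
apply/setP => i; rewrite inE.
have : i \in \bigcup_v Lab v by rewrite cover inE.
case/bigcupP => a _ ia.
case: (eqVneq a z) => [<- // | az].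
have /connectP[p0 pp0 ea] := conn z a.
case: (shortenP pp0) ea => p pp up _ ea.
case: p pp up ea => [|y q] /=; first by move=> _ _ h; rewrite h eqxx in az.
move=> /andP[ezy pq] /andP[zq _] ea.
have ya : connect (remove_edge e z y) y a.
  have [h _] := @path_avoid _ _ z y _ _ pq zq.
  by apply/connectP; exists q.
have : i \in \bigcup_(w in comp_plus e z y) Lab w by rewrite good // inE.
case/bigcupP => b; rewrite inE => zb ib.
have [p [pp lp minp]] := shortest _ _ _ _ (conn a b).
suff zin : z \in a :: p.
  have := lab a b z (ex_intro _ p (And4 pp lp zin minp)).
  by move/subsetP => /(_ i); rewrite inE ia ib; apply.
apply/negPn/negP => zn.
have [h _] := @path_avoid _ _ z y _ _ pp zn.
have ab : connect (remove_edge e z y) a b by apply/connectP; exists p.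
have zy : connect (remove_edge e z y) z y.
  apply: (connect_trans zb); rewrite rem_connect_sym //.
  exact: (connect_trans ya ab).
by move: (@no_conn _ _ eS eI _ _ nc ezy); rewrite zy.
Qed.

Lemma good_exists (T : finType) (e : rel T) (N : nat) (Lab : T -> {set 'I_N}) :
  is_tree e -> (forall u v, e u v -> useless_edge e Lab u v) ->
  exists z, forall y, e z y -> \bigcup_(w in comp_plus e z y) Lab w = setT.
Proof.
case=> [[eS eI] T0 conn nc] use.
pose fp := fun p : T * T =>
  e p.1 p.2 && (\bigcup_(w in comp_minus e p.1 p.2) Lab w == setT).
case: (pickP fp) => [p0 fp0 | nofp].
- case: (arg_minnP (fun p => #|comp_minus e p.1 p.2|) fp0) => [[z y]].
  move=> /andP[/= ezy fy] minp.
  have yz : y != z by apply/eqP => h; move: ezy; rewrite h eI.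
  exists y => w eyw.
  case: (eqVneq w z) => [-> | wz].
  + have -> : comp_plus e y z = comp_minus e z y.
      by apply/setP=> x; rewrite !inE (eq_connect (rem_comm _ e y z)).
    exact/eqP.
  + case: (use y w eyw) => // full; exfalso.
    have := minp (y, w); rewrite /fp /= eyw full eqxx => /(_ isT).
    rewrite leqNgt => /negP; apply; apply: proper_card; apply/properP; split.
    * apply/subsetP => x; rewrite !inE => /connectP[p pp ->].
      case: (boolP (y \in w :: p)) => yin.
      - exfalso; have := @no_conn _ _ eS eI _ _ nc eyw.
        have : connect (remove_edge e y w) w y := path_connect pp yin.
        by rewrite rem_connect_sym // => ->.
      - have [h1 h2] := @path_avoid _ _ y z _ _ (sub_path (@rem_sub _ _ _ _) pp) yin.
        have yw : remove_edge e z y y w.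
          by rewrite /remove_edge eyw (negbTE yz) (negbTE wz) /= andbF.
        apply: (connect_trans (connect1 yw)).
        by apply/connectP; exists p.
    * exists y; first by rewrite !inE connect0.
      by rewrite inE rem_connect_sym //; exact: no_conn.
- case/card_gt0P: T0 => z _; exists z => y ezy.
  case: (use z y ezy) => // full.
  by move: (nofp (z, y)); rewrite /fp /= ezy full eqxx.
Qed.
Theorem mainTheorem10 (T : finType) (e : rel T) (N : nat)
  (Lab : T -> {set 'I_N}) :
  is_tree e -> labelling_system e Lab ->
  ((forall u v : T, e u v -> useless_edge e Lab u v) <->
   exists z : T, Lab z = setT).
Proof.
move=> tr ls; split.
- move=> use; have [z gz] := good_exists _ _ _ _ tr use.
  by exists z; exact: (good_full _ _ _ _ tr ls _ gz).
- case=> z hz u v euv.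
  case: tr => [[eS eI] _ conn _].
  have uv : u != v by apply/eqP => h; move: euv; rewrite h eI.
  case: (two_sides _ _ _ _ _ uv (conn u z)) => h; [left | right];
    apply/eqP; rewrite eqEsubset subsetT /= -hz;
    by apply: (bigcup_sup z); rewrite inE.
Qed.
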